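(* Let $\operatorname{Cs}(4)=\{x,y,z\}$ be the quandle with multiplication $xx=x$, $yy=y$, $zz=z$, $xy=x$, $xz=y$, $yx=y$, $yz=x$, $zx=z$, $zy=z$. Then the set of non-zero idempotents of the integral quandle ring $\mathbb{Z}[\operatorname{Cs}(4)]$ is $$I(\mathbb{Z}[\operatorname{Cs}(4)])=\big\{(1-\beta)x+\beta y,\ \alpha x+\alpha y+(1-2\alpha)z~|~\alpha,\beta\in\mathbb{Z}\big\}.$$
   Context: For a quandle $Q$, the quandle ring $\mathbb{Z}[Q]$ is the free abelian group with basis $Q$, with multiplication $\big(\sum_i\alpha_i q_i\big)\big(\sum_j\beta_j q_j\big)=\sum_{i,j}\alpha_i\beta_j (q_iq_j)$ extending the quandle operation bilinearly. $I(\mathbb{Z}[Q])$ denotes the set of non-zero elements $w$ with $w^2=w$. *)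

(* Defs.v *)
From mathcomp Require Import all_boot all_algebra.
Set Implicit Arguments. Unset Strict Implicit. Unset Printing Implicit Defensive.
Import GRing.Theory.
Local Open Scope ring_scope.

Inductive Cs4 : Type := cx | cy | cz.

Definition Cs4_enum : seq Cs4 := [:: cx; cy; cz].

Definition Cs4_eqb (a b : Cs4) : bool :=
  match a, b with
  | cx, cx | cy, cy | cz, cz => true
  | _, _ => false
  end.

Definition Cs4_op (a b : Cs4) : Cs4 :=
  match a, b with
  | cx, cx => cx | cy, cy => cy | cz, cz => cz
  | cx, cy => cx | cx, cz => cy
  | cy, cx => cy | cy, cz => cx
  | cz, cx => cz | cz, cy => cz
  end.

(* An element of the integral quandle ring Z[Cs(4)], given by its
   coefficient function (the basis Cs(4) is finite). *)
Definition ZQ := Cs4 -> int.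

Definition ZQ_mul (u v : ZQ) : ZQ :=
  fun r => \sum_(p <- Cs4_enum) \sum_(q <- Cs4_enum)
              (if Cs4_eqb (Cs4_op p q) r then u p * v q else 0).

Definition ZQ_of (a b c : int) : ZQ :=
  fun r => match r with cx => a | cy => b | cz => c end.

Definition is_nz_idempotent (w : ZQ) : Prop :=
  (exists r, w r <> 0) /\ (forall r, ZQ_mul w w r = w r).

(* Main.v *)
Require Import Defs.
From mathcomp Require Import all_boot all_algebra.
From mathcomp Require Import zify ring.
Import GRing.Theory.
Local Open Scope ring_scope.

Lemma mulE (w : ZQ) :
  [/\ ZQ_mul w w cx = w cx * w cx + w cx * w cy + w cy * w cz,
      ZQ_mul w w cy = w cx * w cz + w cy * w cx + w cy * w cy &
      ZQ_mul w w cz = w cz * (w cx + w cy + w cz)].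
Proof.
rewrite /ZQ_mul /Cs4_enum !big_cons !big_nil /=; split; ring.
Qed.

Theorem proposition4p2 (w : ZQ) :
  is_nz_idempotent w <->
  ((exists beta : int, forall r, w r = ZQ_of (1 - beta) beta 0 r) \/
   (exists alpha : int, forall r, w r = ZQ_of alpha alpha (1 - 2 * alpha) r)).
Proof.
have [Ex Ey Ez] := mulE w.
split.
- case=> [[r0 Hr0] Hid].
  have Hx := Hid cx; have Hy := Hid cy; have Hz := Hid cz.
  rewrite Ex in Hx; rewrite Ey in Hy; rewrite Ez in Hz.
  move: Hr0 Hx Hy Hz.
  set a := w cx; set b := w cy; set c := w cz => Hr0 Hx Hy Hz.
  have Hs : (a + b + c) * ((a + b + c) - 1) = 0.
    have -> : (a + b + c) * ((a + b + c) - 1) =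
      (a * a + a * b + b * c - a) + (a * c + b * a + b * b - b)
      + (c * (a + b + c) - c) by ring.
    by rewrite Hx Hy Hz; ring.
  move/eqP: Hs; rewrite mulf_eq0 subr_eq0 => /orP [/eqP s0 | /eqP s1].
  + exfalso.
    have c0 : c = 0 by rewrite s0 mulr0 in Hz.
    have ab : a + b = 0 by move: s0; rewrite c0 addr0.
    have a0 : a = 0 by rewrite -Hx c0 mulr0 addr0 -mulrDr ab mulr0.
    have b0 : b = 0 by move: s0; rewrite a0 c0 add0r addr0.
    by apply: Hr0; case: r0; rewrite /= -/a -/b -/c ?a0 ?b0 ?c0.
  + have Hc : c * (b - a) = 0.
      have -> : c * (b - a) = (a * a + a * b + b * c - a) - a * (a + b + c - 1) by ring.
      by rewrite Hx s1 subrr mulr0 subr0.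
    move/eqP: Hc; rewrite mulf_eq0 subr_eq0 => /orP [/eqP c0 | /eqP ba].
    * left; exists b; case=> /=; rewrite -/a -/b -/c //.
      move: s1; rewrite c0 addr0 => s1; lia.
    * right; exists a; case=> /=; rewrite -/a -/b -/c //.
      move: s1; rewrite ba => s1; lia.
- case=> [[beta Hb] | [alpha Ha]]; split.
  + have [b0|nz] := eqVneq beta 0.
      by exists cx; rewrite Hb /= b0 subr0.
    by exists cy; rewrite Hb /=; apply/eqP.
  + have e1 := Hb cx; have e2 := Hb cy; have e3 := Hb cz; move: e1 e2 e3 => /= e1 e2 e3.
    by case; rewrite ?Ex ?Ey ?Ez e1 e2 e3; ring.
  + by exists cz; rewrite Ha /=; lia.
  + have e1 := Ha cx; have e2 := Ha cy; have e3 := Ha cz; move: e1 e2 e3 => /= e1 e2 e3.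
    by case; rewrite ?Ex ?Ey ?Ez e1 e2 e3; ring.
Qed.
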